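(* Let $q$ be a power of an odd prime with $q\equiv3\pmod4$, $d=4k+2$ with $k$ a positive integer, $S_0=\{x\in\mathbb F_q^d: x_1^2+\cdots+x_d^2=0\}$, and $A\subset S_0$ with $|A|\gg q^{d/2}$. Then $|\Delta(A)|\gg q$.
   Context: $\|x-y\|=\sum_{i}(x_i-y_i)^2$ and $\Delta(A)=\{\|x-y\|:x,y\in A\}$. $X\gg Y$ means $X\ge cY$ for a constant $c>0$ independent of $q$ (in the hypothesis, a sufficiently large such constant). *)

(* Defs.v *)
From HB Require Import structures.
From mathcomp Require Import all_boot all_order all_algebra all_field.
Set Implicit Arguments. Unset Strict Implicit. Unset Printing Implicit Defensive.
Import Order.TTheory GRing.Theory Num.Theory.
Local Open Scope ring_scope.

Definition sqdist (F : finFieldType) (d : nat) (x y : 'rV[F]_d) : F :=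
  \sum_(i < d) (x 0 i - y 0 i) ^+ 2.

Definition S0 (F : finFieldType) (d : nat) : {set 'rV[F]_d} :=
  [set x : 'rV[F]_d | \sum_(i < d) x 0 i ^+ 2 == 0].

Definition distset (F : finFieldType) (d : nat) (A : {set 'rV[F]_d}) : {set F} :=
  [set sqdist x y | x in A, y in A].

(* Main.v *)
Require Import Defs.
From HB Require Import structures.
From mathcomp Require Import all_boot all_order all_algebra all_field.
From mathcomp Require Import all_fingroup all_solvable all_character.
From mathcomp Require Import ring lra zify.
Import Defs.
Import Order.TTheory GRing.Theory Num.Theory.
Local Open Scope ring_scope.

Lemma exists_psi (F : finFieldType) :
  exists psi : F -> algC, (forall a b, psi (a + b) = psi a * psi b) /\
     psi 0 = 1 /\ exists a, psi a != 1.
Proof.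
pose G := [set: (F : finGroupType)]%G.
have abG : abelian G by apply/centsP => x _ y _; apply: FinRing.zmod_mulgC.
have hN : (1 < Nirr G)%N.
  move: abG; rewrite card_classes_abelian NirrE => /eqP ->.
  by rewrite cardsT; apply: (leq_trans _ (max_card [set 0; 1] )); rewrite cards2 eq_sym oner_neq0.
pose i : Iirr G := inord 1.
have i0 : i != 0 by rewrite -val_eqE /= inordK.
have lin := char_abelianP G abG i.
exists (fun x : F => 'chi_i (x : F : finGroupType)); split.
  move=> a b; exact: (lin_charM lin (in_setT _) (in_setT _)).
split; first exact: (lin_char1 lin).
apply/existsP; apply: contraR i0 => /existsPn H.
rewrite -irr_eq1; apply/eqP/cfunP => x; rewrite cfun1E in_setT.
by have := H x; rewrite negbK => /eqP ->.
Qed.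

Lemma CS (I : finType) (S : {pred I}) (f : I -> rat) :
  (\sum_(i in S) f i) ^+ 2 <= #|S|%:R * \sum_(i in S) f i ^+ 2.
Proof.
have h : 0 <= \sum_(i in S) \sum_(j in S) (f i - f j) ^+ 2.
  by apply: sumr_ge0 => i _; apply: sumr_ge0 => j _; apply: sqr_ge0.
have e : \sum_(i in S) \sum_(j in S) (f i - f j) ^+ 2
    = 2%:R * (#|S|%:R * \sum_(i in S) f i ^+ 2) - 2%:R * (\sum_(i in S) f i) ^+ 2.
  transitivity (\sum_(i in S) (#|S|%:R * f i ^+ 2 - 2%:R * f i * (\sum_(j in S) f j)
                 + \sum_(j in S) f j ^+ 2)).
    apply: eq_bigr => i _.
    under eq_bigr do rewrite sqrrB.
    rewrite big_split /= sumrB sumr_const mulr_natl; congr (_ - _ + _).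
    by rewrite mulr_sumr; apply: eq_bigr => j _; rewrite -mulr_natl mulrA.
  rewrite big_split /= sumrB sumr_const -!mulr_sumr -mulr_suml expr2 -mulr_natl.
  have -> : \sum_(i in S) 2%:R * f i = 2%:R * \sum_(i in S) f i by rewrite mulr_sumr.
  ring.
lra.
Qed.

Lemma sum_sub_le (T : finType) (A B : {set T}) (f : T -> rat) :
  A \subset B -> (forall x, 0 <= f x) -> \sum_(x in A) f x <= \sum_(x in B) f x.
Proof.
move=> sub f0; rewrite [X in _ <= X](big_setID A) /= (setIidPr sub) lerDl.
by apply: sumr_ge0 => x _.
Qed.

Lemma card_sumR (T : finType) (B : {set T}) (P : pred T) :
  (#|[set y in B | P y]|%:R : rat) = \sum_(y in B) ((P y)%:R : rat).
Proof.
rewrite -sum1_card natr_sum big_mkcond /= [RHS]big_mkcond /=.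
by apply: eq_bigr => y _; rewrite inE; case: (y \in B); case: (P y).
Qed.

Lemma sum_ind (F : finType) (u : F) : \sum_(t : F) ((u == t)%:R : rat) = 1.
Proof.
rewrite (bigD1 u) //= eqxx big1 ?addr0 // => t tu.
by rewrite eq_sym (negbTE tu).
Qed.

Definition dot {F : finFieldType} {n} (x y : 'rV[F]_n) : F := \sum_i x 0 i * y 0 i.
Definition nrm {F : finFieldType} {n} (x : 'rV[F]_n) : F := \sum_i x 0 i ^+ 2.
Definition Nset {F : finFieldType} {n} (m : 'rV[F]_n) :=
  [set x : 'rV[F]_n | (nrm x == 0) && (dot x m == 0)].

Section Char.
Variable F : finFieldType.
Variable psi : F -> algC.
Hypothesis psiD : forall a b, psi (a + b) = psi a * psi b.
Hypothesis psi0 : psi 0 = 1.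
Variable a0 : F. Hypothesis psia0 : psi a0 != 1.
Local Notation q := #|F|.

Lemma sum_psi0 : \sum_(x : F) psi x = 0.
Proof.
have E : \sum_(x : F) psi x = psi a0 * \sum_(x : F) psi x.
  rewrite mulr_sumr (reindex_inj (addrI a0)) /=.
  by apply: eq_bigr => x _; rewrite psiD.
have : (1 - psi a0) * \sum_(x : F) psi x = 0 by rewrite mulrBl -E mul1r subrr.
by move/eqP; rewrite mulf_eq0 subr_eq0 eq_sym (negbTE psia0) /= => /eqP.
Qed.

Lemma sum_psi c : \sum_(x : F) psi (c * x) = if c == 0 then q%:R else 0.
Proof.
case: eqP => [->|/eqP c0].
  under eq_bigr do rewrite mul0r psi0.
  by rewrite sumr_const.
transitivity (\sum_(x : F) psi x); last exact: sum_psi0.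
by rewrite [RHS](reindex_inj (mulfI c0)).
Qed.
Hypothesis two : (2%:R : F) != 0.
Hypothesis nsq : forall x : F, x ^+ 2 != -1.

Definition g s := \sum_(x : F) psi (s * x ^+ 2).

Lemma complete_sq s mu : s != 0 ->
  \sum_(x : F) psi (s * x ^+ 2 + mu * x) = psi (- mu ^+ 2 / (2%:R * 2%:R * s)) * g s.
Proof.
move=> s0.
rewrite (reindex_inj (addIr (- (mu / (2%:R * s))))) /= /g mulr_sumr.
apply: eq_bigr => x _; rewrite -psiD; congr psi.
field. by rewrite s0 two (_ : 4%:R = 2%:R * 2%:R :> F) ?mulf_neq0 // -natrM.
Qed.

Lemma gg s : s != 0 -> g s * g (- s) = q%:R.
Proof.
move=> s0; rewrite /g mulr_suml.
transitivity (\sum_(x : F) \sum_(u : F) psi ((- (2%:R * s * u)) * x) * psi (- s * u ^+ 2)).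
  apply: eq_bigr => x _; rewrite mulr_sumr (reindex_inj (addrI x)) /=.
  by apply: eq_bigr => u _; rewrite -!psiD; congr psi; ring.
rewrite exchange_big /=.
under eq_bigr => u _ do rewrite -mulr_suml sum_psi.
rewrite (bigD1 0) //= big1 ?addr0.
  by rewrite mulr0 oppr0 eqxx expr0n /= mulr0 psi0 mulr1.
by move=> u u0; rewrite oppr_eq0 !mulf_eq0 (negbTE s0) (negbTE u0) (negbTE two) /= mul0r.
Qed.

Definition r (c : F) : nat := #|[set x : F | x ^+ 2 == c]|.

Lemma sq_part (f : F -> algC) : \sum_(x : F) f (x ^+ 2) = \sum_(c : F) (r c)%:R * f c.
Proof.
rewrite (partition_big (fun x => x ^+ 2) predT) //=.
apply: eq_bigr => c _.
rewrite (eq_bigr (fun _ => f c)); last by move=> x /eqP ->.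
by rewrite sumr_const /r cardsE mulr_natl.
Qed.

Lemma r_sum : (\sum_(c : F) r c = q)%N.
Proof.
transitivity (\sum_(x : F) 1)%N; last by rewrite sum1_card.
rewrite [RHS](partition_big (fun x => x ^+ 2) predT) //=.
apply: eq_bigr => c _; rewrite /r -sum1_card; apply: eq_bigl => x; by rewrite inE.
Qed.

Lemma r_le2 c : (r c <= 2)%N.
Proof.
case: (pickP [pred x : F | x ^+ 2 == c]) => [x0 /eqP hx0 | none].
  have sub : [set x : F | x ^+ 2 == c] \subset [set x0; - x0].
    apply/subsetP => x; rewrite !inE -hx0 => /eqP e.
    have : (x - x0) * (x + x0) == 0 by rewrite -subr_sqr e subrr.
    by rewrite mulf_eq0 subr_eq0 addr_eq0.
  apply: (leq_trans (subset_leq_card sub)).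
  by rewrite cards2; case: (x0 != - x0).
rewrite /r; have -> : [set x : F | x ^+ 2 == c] = set0 by apply/setP => x; rewrite !inE; apply: none.
by rewrite cards0.
Qed.

Lemma r0 : r 0 = 1%N.
Proof.
rewrite /r (_ : [set x : F | x ^+ 2 == 0] = [set 0]) ?cards1 //.
by apply/setP => x; rewrite !inE sqrf_eq0.
Qed.

Lemma r_disj c : c != 0 -> (r c == 0)%N || (r (-c) == 0)%N.
Proof.
move=> c0; rewrite /r !cards_eq0; apply/norP => -[/set0Pn [x]] ; rewrite inE => /eqP hx.
move=> /set0Pn [y]; rewrite inE => /eqP hy.
have y0 : y != 0 by apply: contraNneq c0 => y0; rewrite -oppr_eq0 -hy y0 expr0n.
have := nsq (x / y); rewrite expr_div_n hx hy => /eqP; apply.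
by rewrite invrN mulrN mulfV.
Qed.

Lemma r_pair c : (r c + r (- c) = 2)%N.
Proof.
have le2 : forall c, (r c + r (- c) <= 2)%N.
  move=> c'; case: (eqVneq c' 0) => [->|c0]; first by rewrite oppr0 r0.
  by case/orP: (@r_disj _ c0) => /eqP ->; rewrite ?addn0 ?r_le2.
have hs : (\sum_(c : F) (r c + r (- c)) = 2 * q)%N.
  rewrite big_split /= r_sum (reindex_inj oppr_inj) /=.
  under eq_bigr do rewrite opprK.
  by rewrite r_sum mul2n addnn.
have h0 : (\sum_(c : F) (2 - (r c + r (- c))) = 0)%N.
  apply/eqP; rewrite -(eqn_add2r (2 * q)) add0n -{1}hs -big_split /=.
  under eq_bigr do rewrite subnK ?le2 //.
  by rewrite sum_nat_const mulnC.
move/eqP: h0; rewrite sum_nat_eq0 => /forallP /(_ c) /=.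
by rewrite subn_eq0 => h; apply/eqP; rewrite eqn_leq h le2.
Qed.

Lemma gneg s : s != 0 -> g (- s) = - g s.
Proof.
move=> s0; apply/eqP; rewrite -addr_eq0 addrC /g.
rewrite (sq_part (fun c => psi (s * c))) (sq_part (fun c => psi (- s * c))).
rewrite [X in _ + X](reindex_inj oppr_inj) /= -big_split /=.
under eq_bigr do rewrite mulrNN -mulrDl -natrD r_pair.
by rewrite -mulr_sumr sum_psi (negbTE s0) mulr0.
Qed.

Lemma gsq s : s != 0 -> g s ^+ 2 = - q%:R.
Proof. by move=> s0; rewrite -(@gg s s0) gneg // mulrN opprK expr2. Qed.


Lemma sum_row_prod n (h : 'I_n -> F -> algC) :
  \sum_(x : 'rV[F]_n) \prod_i h i (x 0 i) = \prod_i \sum_(y : F) h i y.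
Proof.
rewrite bigA_distr_bigA /=.
rewrite (reindex (fun f : {ffun 'I_n -> F} => \row_i f i)) /=.
  by apply: eq_bigr => f _; apply: eq_bigr => i _; rewrite mxE.
exists (fun x : 'rV[F]_n => [ffun i => x 0 i]) => [f _|x _].
  by apply/ffunP => i; rewrite ffunE mxE.
by apply/rowP => i; rewrite mxE ffunE.
Qed.

Lemma indic (a : F) : ((a == 0)%:R * q%:R : algC) = \sum_(s : F) psi (a * s).
Proof. by rewrite sum_psi; case: eqP; rewrite ?mul1r ?mul0r. Qed.


Lemma main_id n (m : 'rV[F]_n) :
  ((q * q * #|Nset m|)%N%:R : algC)
  = \sum_(s : F) \sum_(t : F) \prod_i \sum_(y : F) psi (s * y ^+ 2 + (t * m 0 i) * y).
Proof.
transitivity (\sum_(x : 'rV[F]_n) ((nrm x == 0)%:R * q%:R) * ((dot x m == 0)%:R * q%:R) : algC).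
  rewrite natrM -sum1_card natr_sum mulr_sumr /= big_mkcond /=.
  apply: eq_bigr => x _; rewrite inE.
  by case: (nrm x == 0); case: (dot x m == 0); rewrite /= ?mul0r ?mulr0 ?mul1r ?mulr1 ?natrM.
under eq_bigr do rewrite !indic mulr_suml; rewrite exchange_big /=.
apply: eq_bigr => s _.
under eq_bigr do rewrite mulr_sumr; rewrite exchange_big /=.
apply: eq_bigr => t _; rewrite -sum_row_prod.
apply: eq_bigr => x _; rewrite -psiD.
rewrite -(big_morph psi psiD psi0); congr psi.
rewrite /nrm /dot !mulr_suml -big_split /=; apply: eq_bigr => i _; ring.
Qed.

Lemma X0 n t (m : 'rV[F]_n) :
  \prod_i \sum_(y : F) psi (0 * y ^+ 2 + (t * m 0 i) * y)
  = \prod_i (if t * m 0 i == 0 then q%:R else 0).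
Proof. by apply: eq_bigr => i _; under eq_bigr do rewrite mul0r add0r; rewrite sum_psi. Qed.

Lemma Xs n s t (m : 'rV[F]_n) : s != 0 ->
  \prod_i \sum_(y : F) psi (s * y ^+ 2 + (t * m 0 i) * y)
  = psi (- (t ^+ 2 * nrm m) / (2%:R * 2%:R * s)) * g s ^+ n.
Proof.
move=> s0.
under eq_bigr do rewrite complete_sq //.
rewrite big_split /= prodr_const card_ord -(big_morph psi psiD psi0); congr (psi _ * _).
rewrite /nrm mulr_sumr -sumrN mulr_suml; apply: eq_bigr => i _; ring.
Qed.

Lemma four0 : (2%:R * 2%:R : F) != 0.
Proof. by rewrite mulf_neq0. Qed.

Definition cnt (mu : F) := #|[set t : F | t ^+ 2 * mu == 0]|.

Lemma W_val mu :
  \sum_(s | s != 0) \sum_(t : F) psi (- (t ^+ 2 * mu) / (2%:R * 2%:R * s))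
  = (q * cnt mu)%N%:R - q%:R.
Proof.
rewrite exchange_big /=.
transitivity (\sum_(t : F) ((if t ^+ 2 * mu == 0 then q%:R else 0) - 1) : algC).
  apply: eq_bigr => t _.
  set c := - (t ^+ 2 * mu) / (2%:R * 2%:R).
  transitivity (\sum_(s | s != 0) psi (c * s^-1)).
    by apply: eq_bigr => s s0; congr psi; rewrite /c invfM mulrA.
  rewrite (reindex_inj invr_inj) /=.
  rewrite (eq_bigl (fun s => s != 0)); last by move=> s; rewrite invr_eq0.
  under eq_bigr do rewrite invrK.
  have h := sum_psi c; rewrite (bigD1 0) //= mulr0 psi0 in h.
  have hc : (c == 0) = (t ^+ 2 * mu == 0).
    by rewrite /c mulf_eq0 oppr_eq0 invr_eq0 (negbTE four0) orbF.
  by rewrite -hc -h addrC addrK.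
rewrite sumrB; have -> : \sum_(t : F) (1 : algC) = q%:R by rewrite sumr_const.
by rewrite -big_mkcond /= sumr_const /cnt cardsE natrM mulr_natr.
Qed.

Lemma formula n e (m : 'rV[F]_n) (hg : forall s, s != 0 -> g s ^+ n = - (q ^ e)%N%:R) :
  ((q * q * #|Nset m|)%N%:R : algC)
  = \sum_(t : F) \prod_i (if t * m 0 i == 0 then q%:R else 0)
    - (q ^ e)%N%:R * ((q * cnt (nrm m))%N%:R - q%:R).
Proof.
rewrite main_id (bigD1 0) //=.
under eq_bigr => t _ do rewrite X0.
congr (_ + _).
transitivity (\sum_(s | s != 0) \sum_(t : F)
   psi (- (t ^+ 2 * nrm m) / (2%:R * 2%:R * s)) * (- (q ^ e)%N%:R)).
  by apply: eq_bigr => s s0; apply: eq_bigr => t _; rewrite Xs // hg.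
under eq_bigr do rewrite -mulr_suml.
by rewrite -mulr_suml W_val mulrN mulrC.
Qed.

Lemma T1_0 n :
  \sum_(t : F) \prod_(i < n) (if t * (0 : 'rV[F]_n) 0 i == 0 then q%:R else 0)
  = (q * q ^ n)%N%:R :> algC.
Proof.
under eq_bigr => t _ do under eq_bigr => i _ do rewrite mxE mulr0 eqxx.
under eq_bigr => t _ do rewrite prodr_const card_ord.
by rewrite sumr_const natrM natrX mulr_natl.
Qed.

Lemma T1_nz n (m : 'rV[F]_n) : m != 0 ->
  \sum_(t : F) \prod_(i < n) (if t * m 0 i == 0 then q%:R else 0)
  = (q ^ n)%N%:R :> algC.
Proof.
move=> m0.
have [i0 hi0] : exists i, m 0 i != 0.
  case: (pickP (fun i => m 0 i != 0)) => [i0 hi0 | none]; first by exists i0.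
  case/eqP: m0; apply/rowP => i; rewrite mxE.
  by have := none i => /negbFE /eqP.
rewrite (bigD1 0) //= [X in _ + X]big1 ?addr0.
  under eq_bigr do rewrite mul0r eqxx.
  by rewrite prodr_const card_ord natrX.
move=> t t0; rewrite (bigD1 i0) //= mulf_eq0 (negbTE t0) (negbTE hi0) /=.
by rewrite mul0r.
Qed.

Lemma gpow n e : n = (2 * e)%N -> odd e -> forall s, s != 0 -> g s ^+ n = - (q ^ e)%N%:R.
Proof.
by move=> -> oe s s0; rewrite exprM gsq // exprNn natrX -signr_odd oe expr1 mulN1r.
Qed.

Lemma q_gt0 : (0 < q)%N.
Proof. by apply/card_gt0P; exists 0. Qed.

Lemma N_nz n e (m : 'rV[F]_n) : n = (2 * e)%N -> odd e -> m != 0 ->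
  (q * q * #|Nset m| <= q ^ n)%N.
Proof.
move=> hn oe m0.
have h := @formula n e m (@gpow n e hn oe); rewrite T1_nz // in h.
have c1 : (1 <= cnt (nrm m))%N.
  by apply/card_gt0P; exists 0; rewrite inE expr0n /= mul0r.
have le : (q <= q * cnt (nrm m))%N by rewrite leq_pmulr.
rewrite -natrB // -natrM in h.
have h' : ((q * q * #|Nset m| + q ^ e * (q * cnt (nrm m) - q))%N%:R : algC) = (q ^ n)%N%:R.
  by rewrite natrD h subrK.
move/eqP: h'; rewrite eqr_nat => /eqP <-; exact: leq_addr.
Qed.

Lemma N_0 n e : n = (2 * e)%N -> odd e ->
  (q * #|Nset (0 : 'rV[F]_n)| + q ^ e * (q - 1) = q ^ n)%N.
Proof.
move=> hn oe.
have h := @formula n e 0 (@gpow n e hn oe); rewrite T1_0 in h.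
have hn0 : nrm (0 : 'rV[F]_n) = 0 by rewrite /nrm big1 // => i _; rewrite mxE expr0n.
have hc : cnt 0 = q.
  rewrite /cnt (_ : [set t : F | t ^+ 2 * 0 == 0] = setT) ?cardsT //.
  by apply/setP => t; rewrite !inE mulr0 eqxx.
rewrite hn0 hc -natrB ?leq_pmulr ?q_gt0 // -natrM in h.
have h' : ((q * q * #|Nset (0 : 'rV[F]_n)| + q ^ e * (q * q - q))%N%:R : algC) = (q * q ^ n)%N%:R.
  by rewrite natrD h subrK.
move/eqP: h'; rewrite eqr_nat => /eqP h2.
have qp := q_gt0.
apply/eqP; rewrite -(eqn_pmul2l qp) -h2 mulnDr !mulnA; apply/eqP; congr (_ + _).
have -> : (q * q - q = q * (q - 1))%N by rewrite mulnBr muln1.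
by rewrite mulnA (mulnC q (q ^ e)%N).
Qed.
End Char.

Section Comb.
Variables (F : finFieldType) (n : nat) (A : {set 'rV[F]_n}).
Local Notation q := #|F|.

Definition nu (x : 'rV[F]_n) (t : F) : rat := #|[set y in A | dot x y == t]|%:R.

Lemma fact1 x : \sum_(t : F) nu x t = #|A|%:R.
Proof.
under eq_bigr do rewrite /nu card_sumR.
rewrite exchange_big /=.
under eq_bigr do rewrite sum_ind.
by rewrite sumr_const.
Qed.

Lemma fact2 x : \sum_(t : F) nu x t ^+ 2
   = \sum_(y in A) \sum_(y' in A) ((dot x y == dot x y')%:R : rat).
Proof.
under eq_bigr do rewrite /nu card_sumR expr2 mulr_suml.
rewrite exchange_big /=; apply: eq_bigr => y _.
under eq_bigr do rewrite mulr_sumr.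
rewrite exchange_big /=; apply: eq_bigr => y' _.
rewrite (bigD1 (dot x y)) //= eqxx mul1r [X in _ + X]big1 ?addr0.
  by rewrite eq_sym.
by move=> t ht; rewrite eq_sym (negbTE ht) mul0r.
Qed.

Lemma dotB x (y y' : 'rV[F]_n) : dot x (y - y') = dot x y - dot x y'.
Proof.
rewrite /dot -sumrB; apply: eq_bigr => i _; rewrite !mxE; ring.
Qed.

Lemma dot0 (x : 'rV[F]_n) : dot x 0 = 0.
Proof. by rewrite /dot big1 // => i _; rewrite mxE mulr0. Qed.

Lemma fact3 (y y' : 'rV[F]_n) :
  \sum_(x in Nset 0) ((dot x y == dot x y')%:R : rat) = #|Nset (y - y')|%:R.
Proof.
rewrite -card_sumR; congr (_%:R); apply: eq_card => x.
by rewrite !inE dot0 dotB subr_eq0 eqxx andbT.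
Qed.
End Comb.
Arguments nu {F n} A x t.

Section Main.
Variables (F : finFieldType) (n e : nat) (A : {set 'rV[F]_n}).
Local Notation q := #|F|.
Hypothesis hn : n = (2 * e)%N.
Hypothesis Hnz : forall m : 'rV[F]_n, m != 0 -> (q * q * #|Nset m| <= q ^ n)%N.
Hypothesis H0 : (q * #|Nset (0 : 'rV[F]_n)| + q ^ e * (q - 1) = q ^ n)%N.
Hypothesis AS : A \subset Nset 0.
Hypothesis Abig : (q ^ e <= #|A|)%N.

Definition Pdots := [set dot x y | x in A, y in A].
Definition nuT (t : F) := \sum_(x in A) nu A x t.
Definition E := \sum_(t : F) nuT t ^+ 2.
Local Notation a := (#|A|%:R : rat).
Local Notation Q := (q%:R : rat).

Lemma S1 : \sum_(t : F) nuT t = a ^+ 2.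
Proof.
rewrite /nuT exchange_big /=; under eq_bigr do rewrite fact1.
by rewrite sumr_const expr2 mulr_natr.
Qed.

Lemma nuT_ge0 t : 0 <= nuT t.
Proof. by apply: sumr_ge0 => x _; rewrite /nu ler0n. Qed.

Lemma S2 : a ^+ 4 <= #|Pdots|%:R * E.
Proof.
have hP : \sum_(t : F) nuT t = \sum_(t in Pdots) nuT t.
  rewrite [LHS](bigID (mem Pdots)) /= [X in _ + X]big1 ?addr0 // => t tP.
  apply: big1 => x xA; rewrite /nu.
  have -> : [set y in A | dot x y == t] = set0.
    apply/setP => y; rewrite !inE; apply/negbTE/andP => -[yA /eqP ht].
    by move: tP; rewrite -ht => /negP; apply; apply/imset2P; exists x y.
  by rewrite cards0.
have -> : a ^+ 4 = (\sum_(t in Pdots) nuT t) ^+ 2 by rewrite -hP S1 -exprM.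
apply: (le_trans (@CS F Pdots nuT)); apply: ler_wpM2l => //.
rewrite /E [X in _ <= X](bigID (mem Pdots)) /= lerDl.
by apply: sumr_ge0 => t _; apply: sqr_ge0.
Qed.

Lemma S3 : \sum_(t : F) (Q * nuT t - a ^+ 2) ^+ 2 = Q ^+ 2 * E - Q * a ^+ 4.
Proof.
transitivity (\sum_(t : F) (Q ^+ 2 * nuT t ^+ 2 - (2%:R * Q * a ^+ 2) * nuT t + a ^+ 4)).
  by apply: eq_bigr => t _; ring.
rewrite big_split sumrB /= -!mulr_sumr S1 sumr_const /E -mulr_natr; ring.
Qed.

Lemma S4 t : (Q * nuT t - a ^+ 2) ^+ 2 <= a * \sum_(x in A) (Q * nu A x t - a) ^+ 2.
Proof.
have -> : Q * nuT t - a ^+ 2 = \sum_(x in A) (Q * nu A x t - a).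
  by rewrite sumrB -mulr_sumr sumr_const expr2 mulr_natr.
exact: CS.
Qed.

Lemma S6 x : \sum_(t : F) (Q * nu A x t - a) ^+ 2 = Q ^+ 2 * \sum_(t : F) nu A x t ^+ 2 - Q * a ^+ 2.
Proof.
transitivity (\sum_(t : F) (Q ^+ 2 * nu A x t ^+ 2 - (2%:R * Q * a) * nu A x t + a ^+ 2)).
  by apply: eq_bigr => t _; ring.
rewrite big_split sumrB /= -!mulr_sumr fact1 sumr_const -mulr_natr; ring.
Qed.

Lemma S7 : \sum_(x in Nset 0) \sum_(t : F) nu A x t ^+ 2
  = \sum_(y in A) \sum_(y' in A) (#|Nset (y - y')|%:R : rat).
Proof.
under eq_bigr do rewrite fact2.
rewrite exchange_big /=; apply: eq_bigr => y _.
rewrite exchange_big /=; apply: eq_bigr => y' _.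
exact: fact3.
Qed.

Lemma S8 : Q ^+ 2 * \sum_(y in A) \sum_(y' in A) (#|Nset (y - y')|%:R : rat)
  <= a * (Q ^+ 2 * #|Nset (0 : 'rV[F]_n)|%:R) + a ^+ 2 * (q ^ n)%N%:R.
Proof.
have hb : forall y y' : 'rV[F]_n, Q ^+ 2 * #|Nset (y - y')|%:R
    <= (y == y')%:R * (Q ^+ 2 * #|Nset (0 : 'rV[F]_n)|%:R) + (q ^ n)%N%:R.
  move=> y y'; case: eqP => [->|/eqP ne].
    by rewrite subrr mul1r lerDl ler0n.
  rewrite mul0r add0r expr2 -!natrM ler_nat; apply: Hnz; by rewrite subr_eq0.
rewrite mulr_sumr.
apply: (le_trans (y := \sum_(y in A) \sum_(y' in A)
     ((y == y')%:R * (Q ^+ 2 * #|Nset (0 : 'rV[F]_n)|%:R) + (q ^ n)%N%:R))).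
  apply: ler_sum => y _; rewrite mulr_sumr; apply: ler_sum => y' _; exact: hb.
rewrite (eq_bigr (fun _ => Q ^+ 2 * #|Nset (0 : 'rV[F]_n)|%:R + a * (q ^ n)%N%:R)).
  by rewrite sumr_const -mulr_natl le_eqVlt; apply/orP; left; apply/eqP; ring.
move=> y yA; rewrite big_split /= -mulr_suml sumr_const mulr_natl.
rewrite (bigD1 y) //= eqxx big1 ?addr0 ?mul1r //.
by move=> y' /andP [_ ne]; rewrite eq_sym (negbTE ne).
Qed.

Lemma hmain : Q ^+ 2 * E - Q * a ^+ 4
  <= a * (Q ^+ 2 * (\sum_(x in Nset 0) \sum_(t : F) nu A x t ^+ 2)
          - #|Nset (0 : 'rV[F]_n)|%:R * (Q * a ^+ 2)).
Proof.
rewrite -S3.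
apply: (le_trans (ler_sum _ (fun t _ => S4 t))).
rewrite -mulr_sumr exchange_big /=; apply: ler_wpM2l => //.
have -> : Q ^+ 2 * (\sum_(x in Nset 0) \sum_(t : F) nu A x t ^+ 2)
    - #|Nset (0 : 'rV[F]_n)|%:R * (Q * a ^+ 2)
    = \sum_(x in Nset 0) \sum_(t : F) (Q * nu A x t - a) ^+ 2.
  under [RHS]eq_bigr do rewrite S6.
  by rewrite sumrB -mulr_sumr sumr_const mulr_natl.
apply: sum_sub_le AS _ => x.
by apply: sumr_ge0 => t _; apply: sqr_ge0.
Qed.

Theorem comb_main : Q <= 3%:R * #|Pdots|%:R.
Proof.
set N0 := (#|Nset (0 : 'rV[F]_n)|%:R : rat).
set X := ((q ^ e)%N%:R : rat).
set Z := \sum_(x in Nset 0) \sum_(t : F) nu A x t ^+ 2.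
have q0 : (0 < q)%N by apply/card_gt0P; exists 0.
have hQ : 1 <= Q by rewrite ler1n.
have hX1 : 1 <= X by rewrite ler1n expn_gt0 q0.
have hXa : X <= a by rewrite ler_nat.
have hqn : ((q ^ n)%N%:R : rat) = X ^+ 2 by rewrite hn mulnC expnM natrX.
have h0 : Q * N0 + X * (Q - 1) = X ^+ 2.
  by move: (congr1 (fun m => m%:R : rat) H0); rewrite /= natrD !natrM natrB // hqn.
have hZ := S8; rewrite -S7 hqn -/N0 -/Z in hZ.
have hm := hmain; rewrite -/N0 -/Z in hm.
have hE := S2.
have E0 : 0 <= E by apply: sumr_ge0 => t _; apply: sqr_ge0.
have N00 : 0 <= N0 by rewrite ler0n.
have a0 : 0 < a by apply: lt_le_trans hXa; apply: lt_le_trans hX1.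
have P0 : 0 <= (#|Pdots|%:R : rat) by rewrite ler0n.
have h1 : Q ^+ 2 * E - Q * a ^+ 4 <= a ^+ 2 * Q * (Q * N0) + a ^+ 3 * (X * (Q - 1)).
  apply: (le_trans hm).
  have : a * (Q ^+ 2 * Z) <= a * (a * (Q ^+ 2 * N0) + a ^+ 2 * X ^+ 2).
    by apply: ler_wpM2l; [exact: ltW | exact: hZ].
  have h0a : a ^+ 3 * (Q * N0 + X * (Q - 1)) = a ^+ 3 * X ^+ 2 by rewrite h0.
  move=> h; lra.
have h2 : Q * N0 <= a ^+ 2.
  have : Q * N0 <= X ^+ 2 by rewrite -h0 lerDl; apply: mulr_ge0; lra.
  move/le_trans; apply; rewrite !expr2; apply: ler_pM => //; lra.
have h3 : X * (Q - 1) <= a * Q.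
  apply: ler_pM => //; lra.
have h4 : Q * E <= 3%:R * a ^+ 4.
  have : Q ^+ 2 * E <= 3%:R * Q * a ^+ 4.
    have t1 : a ^+ 2 * Q * (Q * N0) <= a ^+ 2 * Q * a ^+ 2.
      by apply: ler_wpM2l => //; apply: mulr_ge0; [apply: sqr_ge0 | lra].
    have t2 : a ^+ 3 * (X * (Q - 1)) <= a ^+ 3 * (a * Q).
      by apply: ler_wpM2l => //; apply: exprn_ge0; apply: ltW.
    have : a ^+ 2 * Q * a ^+ 2 + a ^+ 3 * (a * Q) = 2%:R * Q * a ^+ 4 by ring.
    lra.
  rewrite expr2 -mulrA -[3%:R * Q * _]mulrA [3%:R * _]mulrC -mulrA.
  rewrite ler_pM2l //; lra.
have a4 : 0 < a ^+ 4 by apply: exprn_gt0.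
have : Q * a ^+ 4 <= 3%:R * #|Pdots|%:R * a ^+ 4.
  apply: (le_trans (y := Q * (#|Pdots|%:R * E))); first by apply: ler_wpM2l => //; lra.
  rewrite mulrCA -mulrA [X in _ <= X]mulrC -mulrA.
  by rewrite [_ * 3%:R]mulrC; apply: ler_wpM2l.
by rewrite ler_pM2r.
Qed.
End Main.
Arguments Pdots {F n} A.

Lemma two_neq0 (F : finFieldType) : odd #|F| -> (2%:R : F) != 0.
Proof.
move=> oq; apply/negP => /eqP h2.
pose one : F : finGroupType := (1 : F).
have h1 : (one ^+ 2)%g == 1%g.
  rewrite expgS expg1; change ((1 : F) + 1 == 0); by rewrite -h2.
have ne : #[one]%g != 1%N.
  rewrite order_eq1; change ((1 : F) != 0); exact: oner_neq0.
have o1 : #[one]%g = 2%N.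
  have hd : (#[one]%g %| 2)%N by rewrite order_dvdn.
  have := dvdn_leq (isT : (0 < 2)%N) hd; have := order_gt0 one.
  by move: ne hd; case: (#[one]%g) => [|[|[|m]]].
have : (2 %| #|[set: (F : finGroupType)]|)%N by rewrite -o1 order_dvdG ?inE.
by rewrite cardsT dvdn2 oq.
Qed.

Lemma nsq_of (F : finFieldType) : (#|F| %% 4 = 3)%N -> (2%:R : F) != 0 ->
  forall x : F, x ^+ 2 != -1.
Proof.
move=> q4 two x; apply/negP => /eqP hx.
set j := (#|F| %/ 4)%N.
have hq : #|F| = (2 * (2 * j + 1) + 1)%N.
  rewrite {1}(divn_eq #|F| 4) q4 -/j; lia.
have e1 : (-1 : F) ^+ (2 * j + 1) = -1 by rewrite exprD exprM sqrrN !expr1n mul1r expr1.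
have := expf_card x; rewrite hq exprD exprM hx e1 expr1 => h.
have : 2%:R * x == 0.
  by rewrite mulr2n mulrDl mul1r -{1}h mulN1r addNr.
rewrite mulf_eq0 (negbTE two) /= => /eqP x0.
by move: hx; rewrite x0 expr0n /= => /eqP; rewrite eq_sym oppr_eq0 oner_eq0.
Qed.

Lemma S0_eq (F : finFieldType) n : S0 F n = Nset (0 : 'rV[F]_n).
Proof. by apply/setP => x; rewrite !inE dot0 eqxx andbT. Qed.

Lemma sqdist_dot (F : finFieldType) n (x y : 'rV[F]_n) :
  x \in S0 F n -> y \in S0 F n -> sqdist x y = - (2%:R * dot x y).
Proof.
rewrite !inE => /eqP hx /eqP hy.
rewrite /sqdist.
transitivity (\sum_i x 0 i ^+ 2 + \sum_i y 0 i ^+ 2 - 2%:R * dot x y).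
  rewrite /dot mulr_sumr -big_split -sumrB; apply: eq_bigr => i _; rewrite /=; ring.
by rewrite hx hy add0r sub0r.
Qed.

Lemma P_le_dist (F : finFieldType) n (A : {set 'rV[F]_n}) :
  (2%:R : F) != 0 -> A \subset S0 F n -> (#|Pdots A| <= #|distset A|)%N.
Proof.
move=> two AS.
have sub : Pdots A \subset [set - (2%:R^-1) * u | u in distset A].
  apply/subsetP => t /imset2P [x y xA yA ->]; apply/imsetP; exists (sqdist x y).
    by apply/imset2P; exists x y.
  by rewrite sqdist_dot ?(subsetP AS) // mulrNN mulrA mulVf // mul1r.
exact: leq_trans (subset_leq_card sub) (leq_imset_card _ _).
Qed.

Theorem corollary1p22 (k : nat) (hk : (0 < k)%N) :
  exists C c : rat, 0 < C /\ 0 < c /\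
    forall (F : finFieldType), odd #|F| -> (#|F| %% 4 = 3)%N ->
    forall A : {set 'rV[F]_(4 * k + 2)},
      A \subset S0 F (4 * k + 2) ->
      C * (#|F|%:R) ^+ (2 * k + 1) <= (#|A|%:R : rat) ->
      c * (#|F|%:R) <= (#|distset A|%:R : rat).
Proof.
exists 1, (1 / 3%:R); split; first by [].
split; first by rewrite divr_gt0.
move=> F oq q4 A AS hA.
have two := @two_neq0 F oq.
have nsq := @nsq_of F q4 two.
have [psi [psiD [psi0 [a0 psia0]]]] := exists_psi F.
have hn : (4 * k + 2 = 2 * (2 * k + 1))%N by lia.
have oe : odd (2 * k + 1) by rewrite oddD oddM.
have Hnz : forall m : 'rV[F]_(4 * k + 2), m != 0 ->
    (#|F| * #|F| * #|Nset m| <= #|F| ^ (4 * k + 2))%N.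
  by move=> m m0; exact: (@N_nz F psi psiD psi0 a0 psia0 two nsq _ _ m hn oe m0).
have H0 := @N_0 F psi psiD psi0 a0 psia0 two nsq _ _ hn oe.
have AS' := AS; rewrite S0_eq in AS'.
have Abig : (#|F| ^ (2 * k + 1) <= #|A|)%N by move: hA; rewrite mul1r -natrX ler_nat.
have hm := @comb_main F _ _ A hn Hnz H0 AS' Abig.
have hP := @P_le_dist F _ A two AS.
have : (#|Pdots A|%:R : rat) <= #|distset A|%:R by rewrite ler_nat.
lra.
Qed.
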